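(* Let $w_0,w_1,w_2,\dots$ be complex numbers. If $f\in L^2([0,1])$ satisfies $\int_0^1x^nf(x)\,dx=w_n$ for all $n\ge0$, then $Uf\in H^2$ satisfies $Uf(\frac{n}{n+1})=(n+1)w_n$ for all $n\ge0$. If $h\in H^2$ satisfies $h(\frac{n}{n+1})=w_n$ for all $n\ge0$, then $U^*h\in L^2([0,1])$ satisfies $\int_0^1x^n\,U^*h(x)\,dx=\frac{1}{n+1}w_n$ for all $n\ge0$.
   Context: $H^2$ is the Hardy space of the unit disc $\mathbb{D}$, with Szegő kernel $k_\alpha(z)=\frac{1}{1-\bar\alpha z}$. The Sarason transform $U$ is the unique unitary operator from $L^2([0,1])$ onto $H^2$ with $U(x^n)=\frac{1}{n+1}k_{\frac{n}{n+1}}$ for all integers $n\ge0$. *)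

(* Defs.v *)
From HB Require Import structures.
From mathcomp Require Import all_boot all_order all_algebra.
From mathcomp Require Import all_classical all_reals all_analysis.
From mathcomp Require Import complex.
Set Implicit Arguments. Unset Strict Implicit. Unset Printing Implicit Defensive.
Import Order.TTheory GRing.Theory Num.Theory numFieldNormedType.Exports.
Local Open Scope classical_set_scope.
Local Open Scope ring_scope.
Local Open Scope complex_scope.

Section Sarason.
Variable R : realType.

Definition cre (z : R[i]) : R := complex.Re z.
Definition cim (z : R[i]) : R := complex.Im z.
Definition cnormsq (z : R[i]) : R := cre z ^+ 2 + cim z ^+ 2.
Definition cmk (a b : R) : R[i] := a +i* b.

Definition unit_itv : set R := `[0%R, 1%R].

Definition sq_int (g : R -> R) : Prop :=
  measurable_fun unit_itv g /\
  (@lebesgue_measure R).-integrable unit_itv (fun x => (g x ^+ 2)%:E).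

Definition L2 (f : R -> R[i]) : Prop :=
  sq_int (fun x => cre (f x)) /\ sq_int (fun x => cim (f x)).

Definition cint (f : R -> R[i]) : R[i] :=
  cmk (Rintegral (@lebesgue_measure R) unit_itv (fun x => cre (f x)))
      (Rintegral (@lebesgue_measure R) unit_itv (fun x => cim (f x))).

Definition L2inner (f g : R -> R[i]) : R[i] := cint (fun x => f x * (g x)^*).

Definition mono (n : nat) : R -> R[i] := fun x => cmk (x ^+ n) 0.

(* ----- H^2 of the disc, represented by Taylor coefficients ----- *)
Definition H2 (a : nat -> R[i]) : Prop :=
  cvgn ((series (fun k => cnormsq (a k))) : R^nat).

Definition csum (u : nat -> R[i]) : R[i] :=
  cmk (limn (series (fun k => cre (u k)))) (limn (series (fun k => cim (u k)))).

Definition H2inner (a b : nat -> R[i]) : R[i] := csum (fun k => a k * (b k)^*).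

Definition H2eval (a : nat -> R[i]) (z : R[i]) : R[i] := csum (fun k => a k * z ^+ k).

(* Szego kernel k_alpha(z) = 1/(1 - conj(alpha) z) = \sum_k conj(alpha)^k z^k *)
Definition szego (alpha : R[i]) : nat -> R[i] := fun k => (alpha^*) ^+ k.

Definition pt (n : nat) : R[i] := (n%:R / n.+1%:R).

(* U : L^2([0,1]) -> H^2 is the Sarason transform: linear, unitary
   (maps L^2 into H^2, preserves inner products, onto H^2), and
   U(x^n) = 1/(n+1) k_{n/(n+1)}.  Such U is unique. *)
Definition sarason_transform (U : (R -> R[i]) -> (nat -> R[i])) : Prop :=
  [/\ (forall f, L2 f -> H2 (U f)),
      (forall f g, L2 f -> L2 g -> U (fun x => f x + g x) = (fun k => U f k + U g k)),
      (forall (c : R[i]) f, L2 f -> U (fun x => c * f x) = (fun k => c * U f k)),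
      (forall f g, L2 f -> L2 g -> H2inner (U f) (U g) = L2inner f g) &
      (forall h, H2 h -> exists2 f, L2 f & U f = h) /\
      (forall n : nat, U (mono n) = (fun k => (n.+1%:R)^-1 * szego (pt n) k))].

Definition adjoint_of (U : (R -> R[i]) -> (nat -> R[i]))
    (Ustar : (nat -> R[i]) -> (R -> R[i])) : Prop :=
  (forall h, H2 h -> L2 (Ustar h)) /\
  (forall f h, L2 f -> H2 h -> H2inner (U f) h = L2inner f (Ustar h)).

End Sarason.

(* Main.v *)
Require Import Defs.
From HB Require Import structures.
From mathcomp Require Import all_boot all_order all_algebra.
From mathcomp Require Import all_classical all_reals all_analysis.
From mathcomp Require Import complex.
From mathcomp Require Import measurable_realfun lebesgue_integral_differentiation.
Import Order.TTheory GRing.Theory Num.Theory numFieldNormedType.Exports.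
Local Open Scope classical_set_scope.
Local Open Scope ring_scope.
Lemma limn_scale (R : realType) (c : R) (s : R^nat) :
  limn (fun k => c * s k) = c * limn s.
Proof.
have [->|c0] := eqVneq c 0.
  rewrite mul0r.
  have -> : (fun k => 0 * s k) = (fun=> 0) by apply/funext=> k; rewrite mul0r.
  exact: lim_cst.
have [cs|ncs] := pselect (cvgn s).
  apply: cvg_lim => //.
  exact: cvgMr.
have ncs' : ~ cvgn (fun k => c * s k).
  move=> cv; apply: ncs.
  have -> : s = (fun k => c^-1 * (c * s k)).
    by apply/funext => k; rewrite mulrA mulVf // mul1r.
  apply/cvg_ex; exists (c^-1 * limn (fun k => c * s k)); exact: cvgMr cv.
rewrite (dvgP ncs') (dvgP ncs).
by rewrite [point]/= mulr0. Qed.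

Local Open Scope complex_scope.
Lemma series_scale (R : realType) (r : R) (v : nat -> R) :
  series (fun k => r * v k) = (fun n => r * series v n).
Proof. by apply/funext => m; rewrite /series /= mulr_sumr. Qed.

Lemma scaleCC (R : realType) (r a b : R) :
  r%:C * (a +i* b) = (r * a) +i* (r * b) :> R[i].
Proof. 
have h1 : complex.Re (r%:C * (a +i* b)) = r * a.
  by rewrite /= mul0r subr0.
have h2 : complex.Im (r%:C * (a +i* b)) = r * b.
  by rewrite /= mul0r addr0.
by move: h1 h2; case: (r%:C * (a +i* b)) => x y /= -> ->.
Qed.

Lemma csum_scale (R : realType) (r : R) (u : nat -> R[i]) :
  csum (fun k => r%:C * u k) = r%:C * csum u.
Proof.
rewrite /csum /cmk.
have -> : (fun k => cre (r%:C * u k)) = (fun k => r * cre (u k)).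
  by apply/funext => k; rewrite /cre; case: (u k) => a b /=; rewrite mul0r subr0.
have -> : (fun k => cim (r%:C * u k)) = (fun k => r * cim (u k)).
  by apply/funext => k; rewrite /cim; case: (u k) => a b /=; rewrite mul0r addr0.
rewrite !series_scale !limn_scale.
by rewrite scaleCC.
Qed.

Lemma csum_conj (R : realType) (u : nat -> R[i]) :
  csum (fun k => (u k)^*%R) = (csum u)^*%R.
Proof.
rewrite /csum /cmk.
have -> : (fun k => cre (u k)^*%R) = (fun k => cre (u k)).
  by apply/funext => k; rewrite /cre; case: (u k) => a b /=.
have -> : (fun k => cim (u k)^*%R) = (fun k => (-1) * cim (u k)).
  by apply/funext => k; rewrite /cim; case: (u k) => a b /=; rewrite mulN1r.
by rewrite series_scale limn_scale /= mulN1r.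
Qed.

Lemma RintN (R : realType) (D : set R) (f : R -> R) :
  Rintegral (@lebesgue_measure R) D (fun x => - f x) =
  - Rintegral (@lebesgue_measure R) D f.
Proof.
rewrite /Rintegral.
rewrite [X in fine X]integralE [X in - fine X]integralE.
have -> : (fun x => (- f x)%:E) = (\- (fun x => (f x)%:E))%E.
  by apply/funext => x; rewrite EFinN.
rewrite funeposN funenegN.
have := @integral_ge0 _ _ _ (@lebesgue_measure R) D _ (fun x _ => funepos_ge0 (fun x => (f x)%:E) x).
have := @integral_ge0 _ _ _ (@lebesgue_measure R) D _ (fun x _ => funeneg_ge0 (fun x => (f x)%:E) x).
move: (integral _ _ _) (integral _ _ _) => a b.
case: a => [a| |] ; case: b => [b| |] //= _ _; by rewrite ?opprB ?oppr0.
Qed.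


Lemma L2mono (R : realType) n : L2 (@mono R n).
Proof.
split; split => /=.
- exact: exprn_measurable.
- apply: (continuous_compact_integrable (f := fun x : R => (x ^+ n) ^+ 2)).
    exact: segment_compact.
  apply: continuous_subspaceT => x.
  exact: (continuous_comp (@exprn_continuous R n x) (@exprn_continuous R 2 _)).
- exact: measurable_cst.
- apply: (continuous_compact_integrable (f := fun x : R => 0 ^+ 2)).
    exact: segment_compact.
  by apply: continuous_subspaceT => x; exact: cvg_cst.
Qed.

Lemma cint_conj (R : realType) (F : R -> R[i]) :
  cint (fun x => (F x)^*%R) = (cint F)^*%R.
Proof.
rewrite /cint /cmk.
have -> : (fun x => cre (F x)^*%R) = (fun x => cre (F x)).
  by apply/funext => k; rewrite /cre; case: (F k) => a b /=.
have -> : (fun x => cim (F x)^*%R) = (fun x => - cim (F x)).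
  by apply/funext => k; rewrite /cim; case: (F k) => a b /=.
by rewrite RintN.
Qed.

Lemma conj_realC (R : realType) (a : R) : ((a%:C)^*)%R = a%:C.
Proof.
have h1 : complex.Re ((a +i* 0)^*%R) = a by [].
have h2 : complex.Im ((a +i* 0)^*%R) = 0 by rewrite /= oppr0.
by move: h1 h2; case: ((a +i* 0)^*%R) => ? ? /= -> ->.
Qed.

Lemma mono_conj (R : realType) n x : (@mono R n x)^*%R = @mono R n x.
Proof. exact: conj_realC. Qed.

Lemma pt_real (R : realType) n : pt R n = ((n%:R / n.+1%:R : R))%:C.
Proof. by rewrite rmorphM fmorphV !rmorph_nat. Qed.

Lemma conjM (R : realType) (x y : R[i]) : ((x * y)^*)%R = (x^*%R) * (y^*%R).
Proof. exact: rmorphM. Qed.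

Lemma real_pow_conj (R : realType) (c p : R) k :
  ((c%:C * p%:C ^+ k)^*)%R = c%:C * p%:C ^+ k.
Proof.
have E : c%:C * p%:C ^+ k = (c * p ^+ k)%:C by rewrite rmorphM rmorphXn.
by rewrite E conj_realC.
Qed.

Lemma c_real (R : realType) n : ((n.+1%:R)^-1 : R[i]) = ((n.+1%:R)^-1 : R)%:C.
Proof. by rewrite fmorphV rmorph_nat. Qed.

Theorem proposition2p2 (R : realType)
    (U : (R -> R[i]) -> (nat -> R[i])) (Ustar : (nat -> R[i]) -> (R -> R[i]))
    (hU : sarason_transform U) (hUs : adjoint_of U Ustar) (w : nat -> R[i]) :
  (forall f : R -> R[i], L2 f ->
     (forall n : nat, cint (fun x => mono n x * f x) = w n) ->
     forall n : nat, H2eval (U f) (pt R n) = n.+1%:R * w n) /\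
  (forall h : nat -> R[i], H2 h ->
     (forall n : nat, H2eval h (pt R n) = w n) ->
     forall n : nat, cint (fun x => mono n x * Ustar h x) = (n.+1%:R)^-1 * w n).
Proof.
case: hU => _ _ _ hInner [_ hMono].
split.
  move=> f Lf hw n.
  have := hInner f (@mono R n) Lf (L2mono R n).
  rewrite hMono /H2inner /L2inner.
  have -> : (fun k => U f k * ((n.+1%:R)^-1 * szego (pt R n) k)^*%R) =
            (fun k => ((n.+1%:R)^-1 : R)%:C * (U f k * pt R n ^+ k)).
    apply/funext => k.
    by rewrite /szego pt_real conj_realC c_real real_pow_conj mulrCA.
  rewrite csum_scale.
  change (csum (fun k => U f k * pt R n ^+ k)) with (H2eval (U f) (pt R n)).
  have -> : (fun x => f x * (@mono R n x)^*%R) = (fun x => @mono R n x * f x).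
    by apply/funext => x; rewrite mono_conj mulrC.
  rewrite hw => E.
  by rewrite -E -c_real mulrA mulfV ?mul1r // pnatr_eq0.
move=> h Hh hev n.
case: hUs => _ hAdj.
have := hAdj (@mono R n) h (L2mono R n) Hh.
rewrite hMono /H2inner /L2inner.
have -> : (fun k => (n.+1%:R)^-1 * szego (pt R n) k * (h k)^*%R) =
          (fun k => (((n.+1%:R)^-1 : R)%:C * (h k * pt R n ^+ k))^*%R).
  apply/funext => k.
  rewrite /szego pt_real conj_realC c_real mulrCA conjM real_pow_conj.
  by rewrite mulrC.
have -> : (fun x => @mono R n x * (Ustar h x)^*%R) = (fun x => (@mono R n x * Ustar h x)^*%R).
  by apply/funext => x; rewrite conjM mono_conj.
rewrite csum_conj cint_conj csum_scale.
change (csum (fun k => h k * pt R n ^+ k)) with (H2eval h (pt R n)).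
rewrite hev.
move/(congr1 (@Num.conj _)); rewrite !conjCK => <-.
by rewrite c_real.
Qed.
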